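(* Let $d,k\ge1$, let $g:\mathbb{R}^k\to\mathbb{R}$ be differentiable with $g(0)=0$ and $\nabla g(0)\neq \mathbf{0}$, and for $B\in\mathbb{R}^{k\times d}$ let $f(z)=g(Bz)$. Given $n$ training samples $\{(x_i,y_i)\}_{i=1}^n\subset\mathbb{R}^d\times\mathbb{R}$, suppose $f$ is trained to minimize $\frac12\sum_{i=1}^n(y_i-f(x_i))^2$ by gradient descent on $B$ with learning rate $\eta>0$, starting from $B^{(0)}=\mathbf{0}$. Let $B^{(1)}$ be the weight after one gradient descent step and $f_1(z):=g(B^{(1)}z)$. Then for every $z\in\mathbb{R}^d$, $$\nabla f_1(z)\,\nabla f_1(z)^T\propto {B^{(1)}}^TB^{(1)},$$ i.e. $\nabla f_1(z)\nabla f_1(z)^T$ is a scalar multiple of ${B^{(1)}}^TB^{(1)}$.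
   Context: $\nabla f_1(z)\in\mathbb{R}^d$ is the gradient of $f_1$ with respect to its input. ''$P\propto Q$'' for matrices means $P=cQ$ for some scalar $c$. *)

(* Defs.v *)
From HB Require Import structures.
From mathcomp Require Import all_boot all_order all_algebra.
From mathcomp Require Import all_classical all_reals all_analysis.
Set Implicit Arguments. Unset Strict Implicit. Unset Printing Implicit Defensive.
Import Order.TTheory GRing.Theory Num.Theory.
Import numFieldNormedType.Exports.
Local Open Scope ring_scope.

Definition grad (R : realType) (m n : nat) (f : 'M[R]_(m, n) -> R)
    (x : 'M[R]_(m, n)) : 'M[R]_(m, n) :=
  \matrix_(i < m, j < n) ('D_(delta_mx i j) f x).

Definition sq_loss (R : realType) (k d n : nat) (g : 'cV[R]_k -> R)
    (xs : 'I_n -> 'cV[R]_d) (ys : 'I_n -> R) (B : 'M[R]_(k, d)) : R :=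
  2^-1 * \sum_(i < n) (ys i - g (B *m xs i)) ^+ 2.

Definition gd_step (R : realType) (k d n : nat) (g : 'cV[R]_k -> R)
    (xs : 'I_n -> 'cV[R]_d) (ys : 'I_n -> R) (eta : R) (B0 : 'M[R]_(k, d))
    : 'M[R]_(k, d) :=
  B0 - eta *: grad (sq_loss g xs ys) B0.

(* Main.v *)
Require Import Defs.
From HB Require Import structures.
From mathcomp Require Import all_boot all_order all_algebra.
From mathcomp Require Import all_classical all_reals all_analysis.
From mathcomp Require Import ring lra.
Import Order.TTheory GRing.Theory Num.Theory.
Import numFieldNormedType.Exports.
Local Open Scope ring_scope.

Section S.
Lemma congr_lim (T:Type) (U : Type) (x y : T) (F : T -> U) : x = y -> F x = F y. Proof. by move->. Qed.
Variable R : realType.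

Lemma derive_lin (V W : normedModType R) (g : W -> R) (L : V -> W)
  (HL : forall a h v, L (h *: v + a) = h *: L v + L a) a v :
  'D_v (fun x => g (L x)) a = 'D_(L v) g (L a).
Proof.
rewrite /derive.
suff -> : (fun h : R => h^-1 *: (((fun x : V => g (L x)) \o shift a) (h *: v) - g (L a))) =
  (fun h => h^-1 *: ((g \o shift (L a)) (h *: L v) - g (L a))) by [].
by apply/funext => h /=; rewrite /shift /= HL.
Qed.

Lemma derivable_lin (V W : normedModType R) (g : W -> R) (L : V -> W)
  (HL : forall a h v, L (h *: v + a) = h *: L v + L a) a v :
  derivable (fun x => g (L x)) a v = derivable g (L a) (L v).
Proof.
rewrite /derivable.
suff -> : (fun h : R => h^-1 *: (((fun x : V => g (L x)) \o shift a) (h *: v) - g (L a))) =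
  (fun h => h^-1 *: ((g \o shift (L a)) (h *: L v) - g (L a))) by [].
by apply/funext => h /=; rewrite /shift /= HL.
Qed.

Lemma deriveZdir (V : normedModType R) (g : V -> R) y (c : R) w :
  differentiable g y -> 'D_(c *: w) g y = c * 'D_w g y.
Proof. by move=> dg; rewrite !deriveE // linearZ. Qed.


Lemma grad_loss0 (k d n : nat) (g : 'cV[R]_k -> R)
  (hg_diff : forall x : 'cV[R]_k, differentiable g x) (hg0 : g 0 = 0)
  (xs : 'I_n -> 'cV[R]_d) (ys : 'I_n -> R) :
  grad (sq_loss g xs ys) 0 = - (grad g 0 *m (\sum_(s < n) ys s *: xs s)^T).
Proof.
have HL x : forall (a : 'M[R]_(k, d)) (h : R) u, (h *: u + a) *m x = h *: (u *m x) + a *m x.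
  by move=> a h u; rewrite mulmxDl scalemxAl.
pose F (s : 'I_n) := (cst (ys s) - (fun B : 'M[R]_(k, d) => g (B *m xs s))) ^+ 2.
have -> : sq_loss g xs ys = (2^-1 : R) *: \sum_(s < n) F s.
  apply/funext => B; rewrite /sq_loss /= fct_sumE; congr (_ * _).
have dh s (B u : 'M[R]_(k, d)) : derivable (fun B : 'M[R]_(k, d) => g (B *m xs s)) B u.
  rewrite (@derivable_lin _ _ g _ (HL _ (xs s))). exact: diff_derivable.
have dF s B u : derivable (F s) B u.
  by apply: derivableX; apply: derivableB => //; apply: derivable_cst.
apply/matrixP => i j; rewrite !mxE.
rewrite deriveZ; last by apply: derivable_sum.
rewrite derive_sum //.
have Hd s : delta_mx i j *m xs s = xs s j 0 *: delta_mx i 0.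
  apply/matrixP=> a b; rewrite !mxE (bigD1 j) //= big1 ?addr0.
    by rewrite !mxE !eqxx ord1 andbT mulrC.
  by move=> l /negbTE nl; rewrite !mxE nl andbF mul0r.
have DF s : 'D_(delta_mx i j) (F s) 0 = - (2 * ys s * (xs s j 0 * grad g 0 i 0)).
  rewrite /F deriveX; last by apply: derivableB; [exact: derivable_cst | exact: dh].
  rewrite deriveB; [|exact: derivable_cst|exact: dh].
  rewrite derive_cst (@derive_lin _ _ g _ (HL _ (xs s))) Hd deriveZdir // mxE /=.
  have -> : (cst (ys s) - (fun B : 'M[R]_(k, d) => g (B *m xs s))) 0 = ys s - g (0 *m xs s) by [].
  by rewrite mul0mx hg0 expr1 subr0 sub0r scalerN.
under eq_bigr => s _ do rewrite DF.
rewrite big_ord1 !mxE summxE sumrN scalerN mulr_sumr /GRing.scale /= mulr_sumr; congr (- _).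
apply: eq_bigr => s _; rewrite !mxE.
by field.
Qed.
End S.

Theorem proposition2 (R : realType) (d k : nat) (hd : (1 <= d)%N) (hk : (1 <= k)%N)
  (g : 'cV[R]_k -> R)
  (hg_diff : forall x : 'cV[R]_k, differentiable g x)
  (hg0 : g 0 = 0)
  (hgrad0 : grad g 0 != 0)
  (n : nat) (xs : 'I_n -> 'cV[R]_d) (ys : 'I_n -> R)
  (eta : R) (heta : 0 < eta) :
  let B1 := gd_step g xs ys eta 0 in
  let f1 := fun z : 'cV[R]_d => g (B1 *m z) in
  forall z : 'cV[R]_d,
    exists c : R, grad f1 z *m (grad f1 z)^T = c *: (B1^T *m B1).
Proof.
move=> B1 f1 z.
set G := grad g 0. set v := \sum_(s < n) ys s *: xs s.
have HB1 : B1 = eta *: (G *m v^T).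
  by rewrite /B1 /gd_step grad_loss0 // sub0r scalerN opprK.
have HL : forall (a : 'cV[R]_d) (h : R) u, B1 *m (h *: u + a) = h *: (B1 *m u) + B1 *m a.
  by move=> *; rewrite mulmxDr scalemxAr.
set D0 := 'D_G g (B1 *m z).
have Hgf : grad f1 z = (eta * D0) *: v.
  apply/matrixP => j b; rewrite !mxE ord1 /f1 (@derive_lin _ _ _ g _ HL).
  have -> : B1 *m delta_mx j 0 = (eta * v j 0) *: G.
    rewrite -colE HB1; apply/matrixP => a b'; rewrite !mxE big_ord1 !mxE ord1.
    by rewrite (ord1 b'); ring.
  by rewrite deriveZdir // -/D0 mulrAC.
have s_def : G^T *m G = (\sum_l G l 0 ^+ 2)%:M.
  by rewrite [LHS]mx11_scalar !mxE; congr (_%:M); apply: eq_bigr => l _; rewrite !mxE expr2.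
set s := \sum_l G l 0 ^+ 2 in s_def.
have s0 : s != 0.
  apply/eqP => s0'; move/negP: hgrad0; apply.
  have H := psumr_eq0P (fun l _ => sqr_ge0 (G l 0)) s0'.
  apply/eqP/matrixP => l b; rewrite (ord1 b) [RHS]mxE.
  have := H l isT; rewrite /G mxE => /eqP; rewrite sqrf_eq0 => /eqP.
  done.
exists (D0 ^+ 2 / s).
rewrite HB1 Hgf !linearZ /= trmx_mul trmxK.
rewrite -!scalemxAl -mulmxA (mulmxA G^T) s_def mul_scalar_mx -!scalemxAr !scalerA.
by congr (_ *: _); field.
Qed.
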